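(* Let $n,a,b$ be positive integers and $g=a+b$. Among all double brooms $B(n,a',b')$ with $a'+b'=g$, the Wiener index is maximum when $a'=b'=g/2$ if $g$ is even, and when $a'=(g-1)/2$, $b'=(g+1)/2$ if $g$ is odd.
   Context: All graphs are finite and simple; $W(G)=\sum_{\{u,v\}\subseteq V(G)} d(u,v)$ is the Wiener index. A leaf is a vertex of degree $1$; a broom vertex is a vertex adjacent to a leaf. A double broom $B(n,a,b)$ is a tree on $n$ vertices with exactly two broom vertices $x$ and $y$ such that $\deg(x)=a+1$ and $\deg(y)=b+1$ (i.e. a path from $x$ to $y$ with $a$ pendant leaves at $x$ and $b$ pendant leaves at $y$). *)

(* Defs.v *)
From mathcomp Require Import all_boot.
Set Implicit Arguments. Unset Strict Implicit. Unset Printing Implicit Defensive.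

Section Graphs.
Variable T : finType.
Variable e : rel T.

Definition simple_graph : Prop := symmetric e /\ irreflexive e.

Definition connected_graph : Prop := forall u v : T, connect e u v.

(* acyclic: no cycle (a closed walk through >= 3 pairwise distinct vertices) *)
Definition acyclic : Prop := forall c : seq T, ucycle e c -> size c < 3.

Definition is_tree : Prop := simple_graph /\ connected_graph /\ acyclic.

Definition deg (x : T) : nat := #|[set y | e x y]|.

Definition leaf (x : T) : bool := deg x == 1.

Definition broom (x : T) : bool := [exists y, e x y && leaf y].

Fixpoint ball (u : T) (k : nat) : {set T} :=
  if k is k'.+1 then ball u k' :|: [set y | [exists x in ball u k', e x y]]
  else [set u].

(* graph distance: least k with v within k steps of u (for connected graphs
   this is < #|T|; the value #|T| is only returned for unreachable pairs) *)
Definition dist (u v : T) : nat := find (fun k => v \in ball u k) (iota 0 #|T|).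

(* Wiener index: sum of distances over unordered pairs of distinct vertices *)
Definition wiener : nat :=
  \sum_(p : T * T | (enum_rank p.1 < enum_rank p.2)%N) dist p.1 p.2.

Definition double_broom (n a b : nat) : Prop :=
  #|T| = n /\ is_tree /\
  exists x y : T, [/\ x != y, [set z | broom z] = [set x; y],
                      deg x = a.+1 & deg y = b.+1].
End Graphs.

(* Main.v *)
Require Import Defs.
From mathcomp Require Import all_boot all_algebra zify ring.
Set Implicit Arguments. Unset Strict Implicit. Unset Printing Implicit Defensive.

Section Basic.
Variable T : finType.
Variable e : rel T.
Hypothesis esym : symmetric e.
Hypothesis eirr : irreflexive e.

Lemma ball0 u v : (v \in ball e u 0) = (v == u).
Proof. by rewrite /= in_set1. Qed.

Lemma ballS u k v : (v \in ball e u k.+1) =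
  (v \in ball e u k) || [exists x in ball e u k, e x v].
Proof. by rewrite /= in_setU inE. Qed.

Lemma ball_mono u k l v : k <= l -> v \in ball e u k -> v \in ball e u l.
Proof.
move=> /subnK <-; elim: (l - k) => [//|m IH] H.
by rewrite addSn ballS IH.
Qed.

Lemma ball_ext u k v w : v \in ball e u k -> e v w -> w \in ball e u k.+1.
Proof. by move=> Hv Hw; rewrite ballS; apply/orP; right; apply/existsP; exists v; rewrite Hv. Qed.

Lemma ball_self u k : u \in ball e u k.
Proof. by apply: (@ball_mono u 0); rewrite ?ball0. Qed.

Lemma ball_pre u v k w : w \in ball e v k -> e u v -> w \in ball e u k.+1.
Proof.
elim: k w => [|k IH] w.
  by rewrite ball0 => /eqP -> H; apply: ball_ext (ball_self _ _) H.
rewrite ballS => /orP [H|/existsP [z /andP [Hz Hzw]]] Huv.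
  by apply: (@ball_mono _ k.+1) => //; apply: IH.
by apply: ball_ext (IH _ Hz Huv) Hzw.
Qed.

Lemma ball_sym u v k : v \in ball e u k -> u \in ball e v k.
Proof.
elim: k v => [|k IH] v.
  by rewrite !ball0 eq_sym.
rewrite ballS => /orP [H|/existsP [z /andP [Hz Hzw]]].
  by apply: (@ball_mono _ k) => //; apply: IH.
by apply: ball_pre (IH _ Hz) _; rewrite esym.
Qed.

Lemma ball_lip (f : T -> nat) u :
  (forall s t, e s t -> f t <= (f s).+1) ->
  forall k v, v \in ball e u k -> (f v <= f u + k) /\ (f u <= f v + k).
Proof.
move=> Hf k; elim: k => [|k IH] v.
  by rewrite ball0 => /eqP ->; lia.
rewrite ballS => /orP [H|/existsP [z /andP [Hz Hzw]]].
  by have := IH _ H; lia.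
have := IH _ Hz; have := Hf _ _ Hzw; have := Hf v z; rewrite esym Hzw.
move=> /(_ isT); lia.
Qed.

Lemma path_ball u p : path e u p -> last u p \in ball e u (size p).
Proof.
elim: p u => [|z p IH] u; first by move=> _; apply: ball_self.
by move=> /andP [Huz Hp]; apply: ball_pre (IH _ Hp) Huz.
Qed.

Lemma dist_le u v k : v \in ball e u k -> dist e u v <= k.
Proof.
move=> H; rewrite /dist.
case: (ltnP k #|T|) => Hk.
  case: (ltnP k (find (fun k0 => v \in ball e u k0) (iota 0 #|T|))) => // /(before_find 0).
  by rewrite nth_iota // add0n H.
apply: leq_trans Hk; apply: leq_trans (find_size _ _) _; by rewrite size_iota.
Qed.

Lemma dist_ball u v : connect e u v -> (dist e u v < #|T|) /\ v \in ball e u (dist e u v).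
Proof.
move=> /connectP [p Hp ->].
case: (shortenP Hp) => p' Hp' Hu _.
have Hs : size p' < #|T|.
  by move: (card_uniqP Hu) => /= <-; apply: max_card.
have Hb : last u p' \in ball e u (size p') by apply: path_ball.
have Hh : has (fun k => last u p' \in ball e u k) (iota 0 #|T|).
  by apply/hasP; exists (size p') => //; rewrite mem_iota.
have Hf := Hh; rewrite has_find size_iota in Hf.
split; first by rewrite /dist.
by have := nth_find 0 Hh; rewrite nth_iota.
Qed.

End Basic.


Section Tree.
Variable T : finType.
Variable e : rel T.
Hypothesis esym : symmetric e.
Hypothesis eirr : irreflexive e.
Hypothesis econ : connected_graph e.
Hypothesis eacy : acyclic e.

Definition ev (v : T) := [rel s t | e s t && (s != v) && (t != v)].

Lemma ev_sym v : symmetric (ev v).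
Proof. by move=> s t /=; rewrite esym andbAC. Qed.

Lemma path_ev_all v s q : path (ev v) s q -> all (predC1 v) q.
Proof.
elim: q s => [//|z q IH] s /= /andP [/andP [/andP [_ _] Hz] Hq].
by rewrite Hz (IH _ Hq).
Qed.

Lemma lemC v w1 w2 : e v w1 -> e v w2 -> w1 != w2 -> connect (ev v) w1 w2 -> False.
Proof.
move=> H1 H2 Hne /connectP [p Hp Hl].
case: (shortenP Hp) Hl => p' Hp' Hu _ Hl.
have Hall := path_ev_all Hp'.
have Hw1 : w1 != v by apply: contraTneq H1 => ->; rewrite eirr.
have Hnil : p' != [::] by apply: contraNneq Hne => Hp0; rewrite Hl Hp0.
have := eacy (c := v :: w1 :: p').
rewrite /ucycle /= rcons_path.
have -> : path e w1 p' by apply: sub_path Hp' => s t /andP [/andP [->]].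
have Hvp : v \notin p'.
  by apply/negP => Hin; move/allP: Hall => /(_ _ Hin) /=; rewrite eqxx.
rewrite -Hl (esym w2 v) H2 H1 /= inE eq_sym (negbTE Hw1) Hvp /=.
move: Hu => /= -> /(_ isT).
by case: p' Hnil {Hp' Hall Hl Hp Hvp}.
Qed.

Variable x : T.
Definition h v := dist e x v.

Lemma h_ball v : h v < #|T| /\ v \in ball e x (h v).
Proof. exact: dist_ball. Qed.

Lemma h_x : h x = 0.
Proof. by apply/eqP; rewrite -leqn0; apply: dist_le; rewrite ball0. Qed.

Lemma h0 v : h v = 0 -> v = x.
Proof. by move=> H; have [_] := h_ball v; rewrite H ball0 => /eqP. Qed.

Lemma h_lip s t : e s t -> h t <= (h s).+1.
Proof. by move=> Hst; apply: dist_le; apply: ball_ext (proj2 (h_ball s)) Hst. Qed.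

Lemma h_lip' s t : e s t -> h s <= (h t).+1.
Proof. by move=> Hst; apply: h_lip; rewrite esym. Qed.

Lemma h_par_ex v : v != x -> exists w, e w v && ((h w).+1 == h v).
Proof.
move=> Hv.
have [Hlt Hb] := h_ball v.
case Ek: (h v) Hb => [|k] Hb.
  by move: Hv; rewrite (h0 Ek) eqxx.
have Hnb : v \notin ball e x k.
  apply/negP => Hk; have := dist_le Hk; rewrite -/(h v) Ek; lia.
move: Hb; rewrite ballS (negbTE Hnb) /= => /existsP [w /andP [Hw Hwv]].
exists w; rewrite Hwv /=.
have := dist_le Hw; have := h_lip Hwv; rewrite -/(h w) Ek => A B.
apply/eqP; lia.
Qed.

Lemma desc k : forall w v, h w = k -> k <= h v -> v != w -> connect (ev v) w x.
Proof.
elim: k => [|k IH] w v Hw Hk Hvw.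
  by rewrite (h0 Hw) connect0.
have Hwx : w != x by apply/negP => /eqP Hwx; move: Hw; rewrite Hwx h_x.
have [w' /andP [Hw'w /eqP Hh]] := h_par_ex Hwx.
have Hvw' : v != w' by apply/negP => /eqP E; move: Hk; rewrite E; lia.
apply: (@connect_trans _ _ w').
  apply: connect1; rewrite /= esym Hw'w eq_sym Hvw /=; by rewrite eq_sym.
apply: IH => //; lia.
Qed.

Lemma UQ v w1 w2 : e w1 v -> e w2 v -> h w1 <= h v -> h w2 <= h v -> w1 = w2.
Proof.
move=> H1 H2 Hh1 Hh2; apply/eqP/negP => /negP Hne.
have Hv1 : v != w1 by apply: contraTneq H1 => ->; rewrite eirr.
have Hv2 : v != w2 by apply: contraTneq H2 => ->; rewrite eirr.
apply: (@lemC v w1 w2) => //; rewrite 1?esym //.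
apply: (@connect_trans _ _ x); first exact: (@desc (h w1)).
rewrite (sym_connect_sym (ev_sym v)); exact: (@desc (h w2)).
Qed.

Definition par v := odflt v [pick w | e w v && (h w < h v)].

Lemma par_spec v : v != x -> e (par v) v /\ (h (par v)).+1 = h v.
Proof.
move=> Hv; have [w /andP [Hw /eqP Hh]] := h_par_ex Hv.
rewrite /par; case: pickP => [w' /andP [Hw' Hlt]|/(_ w)] /=.
  by split => //; have := h_lip Hw'; lia.
by rewrite Hw -Hh leqnn.
Qed.

Lemma par_uniq v w : e w v -> h w <= h v -> v != x -> w = par v.
Proof.
move=> Hw Hh Hv; have [Hp Hph] := par_spec Hv.
apply: (UQ Hw Hp Hh); lia.
Qed.

Lemma edge_cases s t : e s t -> (t != x /\ s = par t /\ (h s).+1 = h t) \/ (s != x /\ t = par s /\ (h t).+1 = h s).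
Proof.
move=> Hst.
have Hts : e t s by rewrite esym.
case: (ltngtP (h s) (h t)) => Hc.
- have Htx : t != x by apply/negP => /eqP E; move: Hc; rewrite E h_x.
  left; split => //; split; first exact: par_uniq (ltnW Hc) Htx.
  have := h_lip Hst; lia.
- have Hsx : s != x by apply/negP => /eqP E; move: Hc; rewrite E h_x.
  right; split => //; split; first exact: par_uniq (ltnW Hc) Hsx.
  have := h_lip Hts; lia.
- exfalso.
  case: (eqVneq t x) => Htx.
    move: Hc; rewrite Htx h_x => /h0 E; move: Hst; rewrite E Htx eirr //.
  have := par_uniq Hst _ Htx; rewrite Hc leqnn => /(_ isT) E.
  have [_] := par_spec Htx; rewrite -E Hc; lia.
Qed.

End Tree.


Section Broom.
Variable T : finType.
Variable e : rel T.
Hypothesis esy : symmetric e.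
Hypothesis eirr : irreflexive e.
Hypothesis econ : connected_graph e.
Hypothesis eacy : acyclic e.
Variables (x y : T) (a b : nat).
Hypothesis Hxy : x != y.
Hypothesis Hbr : [set z | broom e z] = [set x; y].
Hypothesis Hdx : deg e x = a.+1.
Hypothesis Hdy : deg e y = b.+1.
Hypothesis Hab : 0 < a + b.

Local Notation hh := (h e x).
Local Notation pp := (par e x).

Lemma leaf_nb z w1 w2 : leaf e z -> e z w1 -> e z w2 -> w1 = w2.
Proof.
rewrite /leaf /deg => /cards1P [q Hq] H1 H2.
have : w1 \in [set w | e z w] by rewrite inE.
have : w2 \in [set w | e z w] by rewrite inE.
by rewrite Hq !in_set1 => /eqP -> /eqP ->.
Qed.

Lemma leaf_ex z : leaf e z -> exists w, e z w.
Proof.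
rewrite /leaf /deg => /cards1P [q Hq]; exists q.
have : q \in [set w | e z w] by rewrite Hq in_set1.
by rewrite inE.
Qed.

Lemma broom_xy z : broom e z -> z = x \/ z = y.
Proof.
move=> Hz; have : z \in [set z | broom e z] by rewrite inE.
by rewrite Hbr !inE => /orP [/eqP|/eqP]; [left|right].
Qed.

Lemma leaf_adj l q : leaf e l -> e l q -> q = x \/ q = y.
Proof.
move=> Hl Hlq; apply: broom_xy; apply/existsP; exists l; by rewrite esy Hlq.
Qed.

Lemma K2 u w : leaf e u -> leaf e w -> e u w -> forall z, z = u \/ z = w.
Proof.
move=> Hu Hw Huw z.
have Hcl : closed e [pred t | (t == u) || (t == w)].
  have H1 : forall s t, e s t -> (s == u) || (s == w) -> (t == u) || (t == w).
    move=> s t Hst /orP [/eqP E|/eqP E]; subst s.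
      by rewrite (leaf_nb Hu Hst Huw) eqxx orbT.
    by rewrite (leaf_nb Hw Hst (_ : e w u)) ?eqxx // esy.
  move=> s t Hst /=; apply/idP/idP; first exact: H1.
  by apply: H1; rewrite esy.
have := closed_connect Hcl (econ u z); rewrite !inE eqxx /= => Hc.
by case/orP: (Logic.eq_sym Hc) => /eqP ->; [left|right].
Qed.

Lemma deg1 z : deg e z = 1 -> leaf e z.
Proof. by rewrite /leaf => ->. Qed.

Lemma x_nl : ~~ leaf e x.
Proof.
apply/negP => Hx.
have Hb : broom e x.
  have : x \in [set z | broom e z] by rewrite Hbr !inE eqxx.
  by rewrite inE.
move: Hb => /existsP [l /andP [Hxl Hl]].
have [E|E] := K2 Hx Hl Hxl y; first by move: Hxy; rewrite E eqxx.
move: Hx Hl; rewrite /leaf Hdx -E Hdy; lia.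
Qed.

Lemma y_nl : ~~ leaf e y.
Proof.
apply/negP => Hy.
have Hb : broom e y.
  have : y \in [set z | broom e z] by rewrite Hbr !inE eqxx orbT.
  by rewrite inE.
move: Hb => /existsP [l /andP [Hyl Hl]].
have [E|E] := K2 Hy Hl Hyl x; first by move: Hxy; rewrite E eqxx.
move: Hy Hl; rewrite /leaf Hdy -E Hdx; lia.
Qed.

Definition D := hh y.
Definition anc k := iter (D - k) pp y.

Lemma D_pos : 0 < D.
Proof.
rewrite /D lt0n; apply/negP => /eqP /(h0 econ) E; by move: Hxy; rewrite E eqxx.
Qed.

Lemma iter_h m : m <= D -> hh (iter m pp y) = D - m.
Proof.
elim: m => [|m IH] Hm; first by rewrite subn0.
rewrite iterS.
have Hne : iter m pp y != x.
  by apply/negP => /eqP E; move: (IH (ltnW Hm)); rewrite E h_x; lia.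
have [_ Hp] := par_spec econ Hne.
move: Hp; rewrite IH; [lia | exact: ltnW].
Qed.

Lemma anc_h k : k <= D -> hh (anc k) = k.
Proof. move=> Hk; rewrite /anc iter_h; lia. Qed.

Lemma anc_D : anc D = y.
Proof. by rewrite /anc subnn. Qed.

Lemma anc_0 : anc 0 = x.
Proof. apply: (h0 econ); by rewrite anc_h. Qed.

Lemma anc_ne_x k : 0 < k <= D -> anc k != x.
Proof. move=> /andP [H1 H2]; apply/negP => /eqP E; move: (anc_h H2); rewrite E h_x; lia. Qed.

Lemma anc_S k : k < D -> anc k = pp (anc k.+1) /\ e (anc k) (anc k.+1).
Proof.
move=> Hk.
have E : anc k = pp (anc k.+1).
  by rewrite /anc; have -> : D - k = (D - k.+1).+1 by lia.
split => //; rewrite E; apply: (proj1 (par_spec econ _)).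
by apply: anc_ne_x; lia.
Qed.

Lemma anc_nl k : k <= D -> ~~ leaf e (anc k).
Proof.
move=> Hk.
case: (posnP k) => [->|Hk0]; first by rewrite anc_0 x_nl.
case: (ltngtP k D) Hk => // Hlt _; last by rewrite Hlt anc_D y_nl.
apply/negP => Hl.
have Hk1 : k.-1 < D by lia.
have [_ H1] := anc_S Hk1.
have [_ H2] := anc_S Hlt.
have E : (k.-1).+1 = k by lia.
rewrite E in H1.
have H1' : e (anc k) (anc k.-1) by rewrite esy.
have E2 := leaf_nb Hl H2 H1'.
have := anc_h Hlt; rewrite E2 anc_h; lia.
Qed.

Lemma child_ex z : ~~ leaf e z -> z != x -> exists c, e z c && (c != pp z).
Proof.
move=> Hz Hzx.
case: (pickP [pred c | e z c && (c != pp z)]) => [c Hc | Hn]; first by exists c.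
have [Hp _] := par_spec econ Hzx.
case/negP: Hz; rewrite /leaf /deg.
apply/eqP; apply: (@eq_card1 _ (pp z)) => w; rewrite !inE.
apply/idP/idP => [Hw|/eqP ->]; last by rewrite esy.
by move: (Hn w) => /=; rewrite Hw /= => /negbFE.
Qed.

Lemma SL z : ~~ leaf e z -> hh z <= D /\ anc (hh z) = z.
Proof.
suff H : forall m z, #|T| - hh z <= m -> ~~ leaf e z -> hh z <= D /\ anc (hh z) = z.
  by apply: H.
elim => [|m IH] {}z Hm Hz.
  have [Hlt _] := h_ball econ x z; lia.
case: (eqVneq z y) => [->|Hzy]; first by rewrite -/D anc_D.
case: (eqVneq z x) => [->|Hzx]; first by rewrite h_x anc_0.
have [c /andP [Hzc Hcp]] := child_ex Hz Hzx.
have [[Hcx [Ezc Hhc]] | [_ [Ec _]]] := edge_cases esy eirr econ eacy x Hzc; last first.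
  by move: Hcp; rewrite Ec eqxx.
have Hcl : ~~ leaf e c.
  apply/negP => Hc.
  have : broom e z by apply/existsP; exists c; rewrite Hzc Hc.
  by case/broom_xy => E; [move: Hzx | move: Hzy]; rewrite E eqxx.
have [Hlt _] := h_ball econ x c.
have Hm' : #|T| - hh c <= m by lia.
have [Hc1 Hc2] := IH c Hm' Hcl.
split; first lia.
have Hzd : hh z < D by lia.
have [E _] := anc_S Hzd.
by rewrite E Hhc Hc2.
Qed.


Definition f v := if leaf e v then (if e x v then 0 else D.+2) else (hh v).+1.

Lemma leaf_not_both l : leaf e l -> e x l -> e y l -> False.
Proof.
move=> Hl H1 H2; have E := leaf_nb Hl (_ : e l x) (_ : e l y).
by move: Hxy; rewrite E ?eqxx // esy.
Qed.

Lemma f_cases v :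
  [/\ f v = 0, leaf e v & e x v] \/ [/\ f v = D.+2, leaf e v & e y v] \/
  [/\ f v = (hh v).+1, ~~ leaf e v, hh v <= D & anc (hh v) = v].
Proof.
rewrite /f; case: ifP => Hl.
  case: ifP => Hx; first by left.
  right; left; split => //.
  have [q Hq] := leaf_ex Hl.
  have [E|E] := leaf_adj Hl Hq; subst q; last by rewrite esy.
  by move: Hx; rewrite esy Hq.
have [H1 H2] := SL (negbT Hl).
by right; right; split => //; rewrite Hl.
Qed.

Lemma f_bound v : f v < D.+3.
Proof. by case: (f_cases v) => [[->]|[[->]|[-> _ H _]]] //; lia. Qed.

Lemma lipA s t : e s t -> s = pp t -> t != x -> (hh s).+1 = hh t ->
  f t <= (f s).+1 /\ f s <= (f t).+1.
Proof.
move=> Hst Es Htx Hh.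
have Hts : e t s by rewrite esy.
case: (f_cases t) => [[Ft Hl Hxt]|[[Ft Hl Hyt]|[Ft Hl HD Ha]]].
- have [E|E] := leaf_adj Hl Hts; rewrite E in Hst *.
    rewrite Ft /f (negbTE x_nl) h_x; lia.
  by exfalso; apply: (leaf_not_both Hl Hxt Hst).
- have [E|E] := leaf_adj Hl Hts; rewrite E in Hst *.
    by exfalso; apply: (leaf_not_both Hl Hst Hyt).
  rewrite Ft /f (negbTE y_nl) -/D; lia.
- have Ht0 : 0 < hh t by lia.
  have Hk : (hh t).-1 < D by lia.
  have [E _] := anc_S Hk.
  have E' : (hh t).-1.+1 = hh t by lia.
  rewrite E' Ha -Es in E.
  have Hsl : ~~ leaf e s by rewrite -E; apply: anc_nl; lia.
  rewrite Ft /f (negbTE Hsl); lia.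
Qed.

Lemma f_lip s t : e s t -> f t <= (f s).+1.
Proof.
move=> Hst.
case: (edge_cases esy eirr econ eacy x Hst) => [[H1 [H2 H3]]|[H1 [H2 H3]]].
  by have [] := lipA Hst H2 H1 H3.
have Hts : e t s by rewrite esy.
by have [] := lipA Hts H2 H1 H3.
Qed.

Lemma anc_ball i j : i <= j <= D -> anc j \in ball e (anc i) (j - i).
Proof.
move=> /andP [Hij HjD].
move: Hij HjD; elim: j => [|j IH] Hij HjD.
  by rewrite leqn0 in Hij; rewrite (eqP Hij) subnn ball_self.
case: (eqVneq i j.+1) => [->|Hne]; first by rewrite subnn ball_self.
have Hij' : i <= j by lia.
have Hj : j < D by lia.
have [_ He] := anc_S Hj.
have -> : j.+1 - i = (j - i).+1 by lia.
apply: ball_ext He; apply: IH => //; lia.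
Qed.

Definition cnt k := if k == 0 then a else if k == D.+2 then b else 1.

Definition G k j := if k == j then (if (k == 0) || (k == D.+2) then 2 else 0) else (k - j) + (j - k).

Lemma G_sym k j : G k j = G j k.
Proof. rewrite /G eq_sym; case: eqP => [->|_] //; lia. Qed.


Lemma f_anc k : k <= D -> f (anc k) = k.+1.
Proof. move=> Hk; by rewrite /f (negbTE (anc_nl Hk)) anc_h. Qed.

Lemma card_f k : k < D.+3 -> #|[set v | f v == k]| = cnt k.
Proof.
move=> Hk; rewrite /cnt.
have HD := D_pos.
case: eqP => [->|Hk0].
  have Eset : [set w | e x w] = anc 1 |: [set v | f v == 0].
    apply/setP => w; rewrite !inE; apply/idP/idP.
      move=> Hxw; case: (f_cases w) => [[-> _ _]|[[_ Hl Hyw]|[_ Hl HwD Ha]]].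
      - by rewrite orbT.
      - by exfalso; apply: (leaf_not_both Hl Hxw Hyw).
      - have := h_lip econ x Hxw; rewrite h_x => H1.
        case: (posnP (hh w)) => H0.
          by move: Hxw; rewrite (h0 econ H0) eirr.
        have E1 : hh w = 1 by lia.
        by rewrite -{1}Ha E1 eqxx.
    case/orP => [/eqP ->|].
      by have [_] := anc_S HD; rewrite anc_0.
    by case: (f_cases w) => [[-> _ ->]|[[-> _ _]|[-> _ _ _]]].
  have Hn : anc 1 \notin [set v | f v == 0] by rewrite inE f_anc.
  by move: Hdx; rewrite /deg Eset cardsU1 Hn => [[]].
case: eqP => [->|HkD].
  have Hyx : y != x by rewrite eq_sym.
  have [Hpy _] := par_spec econ Hyx.
  have Eset : [set w | e y w] = pp y |: [set v | f v == D.+2].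
    apply/setP => w; rewrite !inE; apply/idP/idP.
      move=> Hyw; case: (edge_cases esy eirr econ eacy x Hyw) => [[Hwx [Ey Hh]]|[_ [-> _]]]; last by rewrite eqxx.
      case: (f_cases w) => [[_ Hl Hxw]|[[-> _ _]|[_ Hl HwD Ha]]].
      - by exfalso; apply: (leaf_not_both Hl Hxw Hyw).
      - by rewrite eqxx orbT.
      - by move: HwD; rewrite -Hh -/D; lia.
    case/orP => [/eqP ->|]; first by rewrite esy.
    case: (f_cases w) => [[-> _ _]|[[-> _ ->]|[-> _ HwD _]]] //.
    move/eqP => E; lia.
  have Hn : pp y \notin [set v | f v == D.+2].
    have Hk1 : D.-1 < D by lia.
    have [E _] := anc_S Hk1.
    have E' : D.-1.+1 = D by lia.
    rewrite E' anc_D in E.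
    rewrite inE -E f_anc; lia.
  by move: Hdy; rewrite /deg Eset cardsU1 Hn => [[]].
have Eset : [set v | f v == k] = [set anc k.-1].
  apply/setP => w; rewrite !inE; apply/idP/idP.
    case: (f_cases w) => [[-> _ _]|[[-> _ _]|[-> _ HwD Ha]]].
    - by move/eqP => E; rewrite E in Hk0.
    - by move/eqP => E; rewrite E in HkD.
    - by move/eqP => <-; rewrite /= Ha.
  move/eqP => ->; rewrite f_anc; lia.
by rewrite Eset cards1.
Qed.

Lemma anc_ball' i j : i <= j <= D -> anc i \in ball e (anc j) (j - i).
Proof. by move=> H; apply: ball_sym => //; apply: anc_ball. Qed.

Lemma ub u v : u != v -> v \in ball e u (G (f u) (f v)).
Proof.
have HD := D_pos.
have Hx1 : forall w k, e w x -> k <= D -> anc k \in ball e w k.+1.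
  move=> w k Hw Hk; apply: ball_pre Hw; rewrite -anc_0.
  have Hk' : 0 <= k <= D by lia.
  by have := anc_ball Hk'; rewrite subn0.
have Hy1 : forall w k, e w y -> k <= D -> anc k \in ball e w (D - k).+1.
  move=> w k Hw Hk; apply: ball_pre Hw; rewrite -anc_D.
  by apply: anc_ball'; lia.
have Hxy1 : forall w z, e w x -> e y z -> z \in ball e w D.+2.
  move=> w z Hw Hz; apply: ball_ext Hz; have := Hx1 w D Hw (leqnn D); by rewrite anc_D.
have Hxx : forall w z q, e w q -> e q z -> z \in ball e w 2.
  move=> w z q Hw Hz; apply: ball_ext Hz; apply: ball_pre Hw; exact: ball_self.
have Gn : forall k j, k != j -> G k j = (k - j) + (j - k).
  by move=> k j Hkj; rewrite /G (negbTE Hkj).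
move=> Huv.
case: (f_cases u) => [[Fu Hlu Hxu]|[[Fu Hlu Hyu]|[Fu Hlu HuD Hau]]];
case: (f_cases v) => [[Fv Hlv Hxv]|[[Fv Hlv Hyv]|[Fv Hlv HvD Hav]]];
rewrite Fu Fv.
- by rewrite /G eqxx; apply: (Hxx _ _ x); rewrite // esy.
- rewrite Gn //; have -> : 0 - D.+2 + (D.+2 - 0) = D.+2 by lia.
  by apply: Hxy1; rewrite // esy.
- rewrite Gn //; have -> : 0 - (hh v).+1 + ((hh v).+1 - 0) = (hh v).+1 by lia.
  have Hux : e u x by rewrite esy.
  by have := Hx1 u (hh v) Hux HvD; rewrite Hav.
- rewrite Gn //; have -> : D.+2 - 0 + (0 - D.+2) = D.+2 by lia.
  by apply: ball_sym => //; apply: Hxy1; rewrite // esy.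
- by rewrite /G eqxx orbT; apply: (Hxx _ _ y); rewrite // esy.
- rewrite Gn; last by apply/eqP; lia.
  have -> : D.+2 - (hh v).+1 + ((hh v).+1 - D.+2) = (D - hh v).+1 by lia.
  have Huy : e u y by rewrite esy.
  by have := Hy1 u (hh v) Huy HvD; rewrite Hav.
- rewrite Gn //; have -> : (hh u).+1 - 0 + (0 - (hh u).+1) = (hh u).+1 by lia.
  have Hvx : e v x by rewrite esy.
  by apply: ball_sym => //; have := Hx1 v (hh u) Hvx HuD; rewrite Hau.
- rewrite Gn; last by apply/eqP; lia.
  have -> : (hh u).+1 - D.+2 + (D.+2 - (hh u).+1) = (D - hh u).+1 by lia.
  have Hvy : e v y by rewrite esy.
  by apply: ball_sym => //; have := Hy1 v (hh u) Hvy HuD; rewrite Hau.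
- have Hne : hh u != hh v by apply: contraNneq Huv => E; rewrite -Hau -Hav E.
  rewrite Gn; last by rewrite eqSS.
  case: (ltngtP (hh u) (hh v)) Hne => // Hlt _.
    have -> : (hh u).+1 - (hh v).+1 + ((hh v).+1 - (hh u).+1) = hh v - hh u by lia.
    have Hr : hh u <= hh v <= D by lia.
    by have := anc_ball Hr; rewrite Hau Hav.
  have -> : (hh u).+1 - (hh v).+1 + ((hh v).+1 - (hh u).+1) = hh u - hh v by lia.
  have Hr : hh v <= hh u <= D by lia.
  by have := anc_ball' Hr; rewrite Hau Hav.
Qed.


Lemma f_leaf w : (f w == 0) || (f w == D.+2) -> leaf e w.
Proof.
case: (f_cases w) => [[_ -> _]|[[_ -> _]|[-> _ HD _]]] //.
move=> /orP [/eqP|/eqP]; lia.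
Qed.

Lemma lb u v : u != v -> G (f u) (f v) <= dist e u v.
Proof.
move=> Huv.
have [_ Hb] := dist_ball (econ u v).
have [L1 L2] := ball_lip esy f_lip Hb.
rewrite /G; case: eqP => Heq; last lia.
case: ifP => // Hc.
move: Hb; case: (dist e u v) => [|[|d]] Hb //.
  by move: Hb; rewrite ball0 eq_sym (negbTE Huv).
move: Hb; rewrite ballS ball0 eq_sym (negbTE Huv) /= => /existsP [z /andP [Hz Hzv]].
rewrite in_set1 in Hz; rewrite (eqP Hz) in Hzv.
have Hlu := f_leaf Hc.
have Hlv : leaf e v by apply: f_leaf; rewrite -Heq.
have [E|E] := leaf_adj Hlu Hzv; rewrite E in Hlv.
  by move: x_nl; rewrite Hlv.
by move: y_nl; rewrite Hlv.
Qed.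

Lemma dist_f u v : dist e u v + (if u == v then G (f u) (f u) else 0) = G (f u) (f v).
Proof.
case: eqP => [->|/eqP Huv].
  have := @dist_le _ e v v 0 (ball_self _ _ _); rewrite leqn0 => /eqP ->; by [].
rewrite addn0; apply/eqP; rewrite eqn_leq (lb Huv) andbT.
exact: dist_le (ub Huv).
Qed.

End Broom.


Lemma sum_part (T : finType) (f : T -> nat) (M : nat) (H : nat -> nat) :
  (forall v, f v < M) ->
  \sum_(v : T) H (f v) = \sum_(k < M) #|[set v | f v == k]| * H k.
Proof.
move=> Hf.
transitivity (\sum_(v : T) \sum_(k < M) (f v == k) * H k).
  apply: eq_bigr => v _.
  rewrite (bigD1 (Ordinal (Hf v))) //= eqxx mul1n big1 ?addn0 // => k Hk.
  have -> : (f v == k) = false; last by [].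
  apply/negbTE; move: Hk; apply: contra => /eqP E; apply/eqP; apply: val_inj; by rewrite /= E.
rewrite exchange_big; apply: eq_bigr => k _ /=.
rewrite -big_distrl /=; congr (_ * _).
rewrite -sum1_card [RHS]big_mkcond /=; apply: eq_bigr => v _; rewrite inE.
by case: (f v == k).
Qed.

Lemma sym_sum (T : finType) (F : T -> T -> nat) :
  (forall u v, F u v = F v u) -> (forall u, F u u = 0) ->
  \sum_u \sum_v F u v =
  (\sum_(p : T * T | (enum_rank p.1 < enum_rank p.2)%N) F p.1 p.2).*2.
Proof.
move=> Hs H0.
rewrite pair_big /= (bigID (fun p : T * T => (enum_rank p.1 < enum_rank p.2)%N)) /= -addnn.
congr (_ + _).
rewrite (reindex_inj (h := fun p : T * T => (p.2, p.1))) /=; last first.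
  by move=> [? ?] [? ?] [-> ->].
rewrite big_mkcond [RHS]big_mkcond; apply: eq_bigr => [[u v]] _ /=.
rewrite Hs.
case: (ltngtP (enum_rank v) (enum_rank u)) => H //=.
have E : enum_rank v = enum_rank u by apply: val_inj.
by rewrite (enum_rank_inj E) H0.
Qed.

Definition Gd D k j := if k == j then (if (k == 0) || (k == D.+2) then 2 else 0) else (k - j) + (j - k).
Definition cntd a b D k := if k == 0 then a else if k == D.+2 then b else 1.
Definition Psi a b D := \sum_(k < D.+3) cntd a b D k * \sum_(j < D.+3) cntd a b D j * Gd D k j.
Definition A1 D := \sum_(i < D.+1) i.+1.
Definition A3 D := \sum_(i < D.+1) \sum_(j < D.+1) ((i - j) + (j - i)).

Lemma peel D (F : nat -> nat) :
  \sum_(k < D.+3) F k = F 0 + \sum_(i < D.+1) F i.+1 + F D.+2.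
Proof. by rewrite big_ord_recl big_ord_recr /= addnA. Qed.

Lemma A2_eq D : \sum_(i < D.+1) (D.+1 - i) = A1 D.
Proof.
rewrite /A1 (reindex_inj rev_ord_inj) /=; apply: eq_bigr => i _.
have := ltn_ord i; lia.
Qed.

Lemma Psi_eq a b D : Psi a b D =
  2*a*a + 2*b*b + 2*a*b*(D+2) + 2*a*A1 D + 2*b*A1 D + A3 D.
Proof.
rewrite /Psi (peel D (fun k => cntd a b D k * \sum_(j < D.+3) cntd a b D j * Gd D k j)).
have c0 : cntd a b D 0 = a by [].
have cD : cntd a b D D.+2 = b by rewrite /cntd; case: ifP => //; rewrite eqxx.
have cS : forall i : 'I_D.+1, cntd a b D i.+1 = 1.
  move=> i; rewrite /cntd /=; have := ltn_ord i; case: eqP => //; lia.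
have I0 : \sum_(j < D.+3) cntd a b D j * Gd D 0 j = 2*a + A1 D + b*(D+2).
  rewrite (peel D (fun j => cntd a b D j * Gd D 0 j)) c0 cD /Gd /=.
  congr (_ + _ + _); [lia| |rewrite /=; lia].
  by rewrite /A1; apply: eq_bigr => i _; rewrite cS; lia.
have ID : \sum_(j < D.+3) cntd a b D j * Gd D D.+2 j = a*(D+2) + A1 D + 2*b.
  rewrite (peel D (fun j => cntd a b D j * Gd D D.+2 j)) c0 cD /Gd /= eqxx -A2_eq.
  congr (_ + _ + _); [lia| |lia].
  by apply: eq_bigr => i _; rewrite cS; have := ltn_ord i; case: eqP; lia.
have IM : \sum_(i < D.+1) cntd a b D i.+1 * \sum_(j < D.+3) cntd a b D j * Gd D i.+1 j
          = a * A1 D + A3 D + b * \sum_(i < D.+1) (D.+1 - i).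
  rewrite /A1 /A3 big_distrr /= big_distrr /= -!big_split /=.
  apply: eq_bigr => i _; rewrite cS mul1n (peel D (fun j => cntd a b D j * Gd D i.+1 j)) c0 cD.
  have Hi := ltn_ord i.
  congr (_ + _ + _).
  - by rewrite /Gd /=; lia.
  - apply: eq_bigr => j _; rewrite cS mul1n /Gd eqSS.
    have Hj := ltn_ord j; case: eqP => [->|]; last by [].
    rewrite subnn /=; case: eqP => //; lia.
  - rewrite /Gd; case: eqP; lia.
rewrite I0 ID IM A2_eq c0 cD; nia.
Qed.

Lemma prod_bal a b : a * b <= (a + b)./2 * uphalf (a + b).
Proof.
have := odd_double_half (a + b); rewrite uphalf_half -muln2.
move: ((a + b)./2) => q.
case: (odd (a + b)) => /= E.
  case: (leqP a b) => H.
    have -> : b = a + (2 * (q - a) + 1) by lia.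
    have -> : q = a + (q - a) by lia.
    move: (q - a) => r; nia.
  have -> : a = b + (2 * (q - b) + 1) by lia.
  have -> : q = b + (q - b) by lia.
  move: (q - b) => r; nia.
case: (leqP a b) => H.
  have -> : b = a + (2 * (q - a)) by lia.
  have -> : q = a + (q - a) by lia.
  move: (q - a) => r; nia.
have -> : a = b + (2 * (q - b)) by lia.
have -> : q = b + (q - b) by lia.
move: (q - b) => r; nia.
Qed.


Lemma broom_eq (T : finType) (e : rel T) n a b : 0 < a + b -> double_broom e n a b ->
  exists D0, n = a + b + D0.+1 /\ (wiener e).*2 + (a + b).*2 = Psi a b D0.
Proof.
move=> Hab [Hn [[[Hs Hi] [Hc Ha]] [x [y [Hxy Hbr Hdx Hdy]]]]].
set D0 := D e x y; exists D0.
set F := f e x y.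
have Hf : forall v, F v < D0.+3 := f_bound Hs Hi Hc Ha Hxy Hbr Hdx Hdy Hab.
have Hcard : forall k, k < D0.+3 -> #|[set v | F v == k]| = cntd a b D0 k.
  move=> k Hk; exact: (card_f Hs Hi Hc Ha Hxy Hbr Hdx Hdy Hab Hk).
have HG : forall u v, dist e u v + (if u == v then Gd D0 (F u) (F u) else 0) = Gd D0 (F u) (F v).
  move=> u v; exact: (dist_f Hs Hi Hc Ha Hxy Hbr Hdx Hdy Hab u v).
have c0 : cntd a b D0 0 = a by [].
have cD : cntd a b D0 D0.+2 = b by rewrite /cntd; case: ifP => //; rewrite eqxx.
have cS : forall i : 'I_D0.+1, cntd a b D0 i.+1 = 1.
  move=> i; rewrite /cntd /=; have := ltn_ord i; case: eqP => //; lia.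
split.
  rewrite -Hn.
  have := sum_part (fun _ => 1) Hf.
  have -> : \sum_(v : T) 1 = #|T| by rewrite sum1_card.
  move=> ->.
  rewrite (eq_bigr (fun k : 'I_D0.+3 => cntd a b D0 k)); last first.
    by move=> k _; rewrite Hcard ?muln1.
  rewrite (peel D0 (fun k => cntd a b D0 k)) c0 cD.
  rewrite (eq_bigr (fun _ => 1)); last by move=> i _; rewrite cS.
  rewrite sum1_card card_ord; lia.
have Hsym : forall u v, dist e u v = dist e v u.
  move=> u v; case: (eqVneq u v) => [->//|Huv].
  have := HG u v; have := HG v u; rewrite eq_sym (negbTE Huv) !addn0 => -> ->.
  rewrite /Gd eq_sym; case: eqP => [->|_] //; lia.
have H0 : forall u, dist e u u = 0.
  by move=> u; have := HG u u; rewrite eqxx; lia.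
have HW := sym_sum Hsym H0.
rewrite -[wiener e]/(\sum_(p : T * T | (enum_rank p.1 < enum_rank p.2)%N) dist e p.1 p.2).
rewrite -HW.
have Hdiag : \sum_(u : T) \sum_(v : T) (if u == v then Gd D0 (F u) (F u) else 0) = (a + b).*2.
  transitivity (\sum_(u : T) Gd D0 (F u) (F u)).
    apply: eq_bigr => u _.
    rewrite (bigD1 u) //= eqxx big1 ?addn0 // => v /negbTE.
    by rewrite eq_sym => ->.
  rewrite (sum_part (fun k => Gd D0 k k) Hf).
  rewrite (eq_bigr (fun k : 'I_D0.+3 => cntd a b D0 k * Gd D0 k k)); last first.
    by move=> k _; rewrite Hcard.
  rewrite (peel D0 (fun k => cntd a b D0 k * Gd D0 k k)) c0 cD.
  rewrite big1; last first.
    move=> i _; rewrite /Gd eqxx /=; have := ltn_ord i; case: eqP => //; lia.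
  rewrite /Gd !eqxx /=; lia.
rewrite -Hdiag -big_split /=.
rewrite (eq_bigr (fun u => \sum_(v : T) Gd D0 (F u) (F v))); last first.
  by move=> u _; rewrite -big_split /=; apply: eq_bigr => v _; rewrite HG.
rewrite (eq_bigr (fun u => \sum_(k < D0.+3) cntd a b D0 k * Gd D0 (F u) k)); last first.
  move=> u _; rewrite (sum_part (Gd D0 (F u)) Hf).
  by apply: eq_bigr => k _; rewrite Hcard.
rewrite (sum_part (fun m => \sum_(k < D0.+3) cntd a b D0 k * Gd D0 m k) Hf).
by apply: eq_bigr => k _; rewrite Hcard.
Qed.

Theorem mainTheorem13 (n a b : nat) : 0 < n -> 0 < a -> 0 < b ->
  forall (T1 : finType) (e1 : rel T1) (a' b' : nat),
    a' + b' = a + b -> double_broom e1 n a' b' ->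
  forall (T2 : finType) (e2 : rel T2),
    double_broom e2 n (a + b)./2 (uphalf (a + b)) ->
    wiener e1 <= wiener e2.
Proof.
move=> Hn Ha Hb T1 e1 a' b' Hab' H1 T2 e2 H2.
have Hg : (a + b)./2 + uphalf (a + b) = a + b.
  have := odd_double_half (a + b); rewrite uphalf_half; lia.
have P1 : 0 < a' + b' by lia.
have P2 : 0 < (a + b)./2 + uphalf (a + b) by lia.
have [D1 [Hn1 HW1]] := broom_eq P1 H1.
have [D2 [Hn2 HW2]] := broom_eq P2 H2.
have ED : D1 = D2 by lia.
subst D2.
rewrite Psi_eq in HW1; rewrite Psi_eq in HW2.
have Hpb := prod_bal a' b'; rewrite Hab' in Hpb.
move: HW1 HW2 Hpb.
set q := (a + b)./2; set u := uphalf (a + b).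
set A := A1 D1; set B := A3 D1.
move=> HW1 HW2 Hpb.
have Hg' : q + u = a + b by exact: Hg.
clearbody q u A B.
have E1 : 2*a'*a' + 2*b'*b' + 2*a'*b'*(D1+2) + 2*a'*A + 2*b'*A + B
   = 2*(a+b)*(a+b) + 2*(a+b)*A + B + 2*(a'*b'*D1).
  have -> : a + b = a' + b' by lia. ring.
have E2 : 2*q*q + 2*u*u + 2*q*u*(D1+2) + 2*q*A + 2*u*A + B
   = 2*(a+b)*(a+b) + 2*(a+b)*A + B + 2*(q*u*D1).
  rewrite -Hg'; ring.
have M : a' * b' * D1 <= q * u * D1 by apply: leq_mul.
rewrite E1 Hab' in HW1; rewrite E2 Hg' in HW2.
move: HW1 HW2 M; move: (a' * b' * D1) (q * u * D1) => XD YD.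
move: (2 * (a + b) * (a + b)) (2 * (a + b) * A) => Z1 Z2; lia.
Qed.
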